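(* Let $\mathcal{F}$ be a saturated fusion system over a finite $p$-group $S$, and let $Q\trianglelefteq S$ be a normal subgroup that is not weakly closed in $\mathcal{F}$. Then there are $P\in Q^{\mathcal{F}}\smallsetminus\{Q\}$, $R\in\mathcal{E}_{\mathcal{F}}\cup\{S\}$, and $\alpha\in\mathrm{Aut}_{\mathcal{F}}(R)$ such that $R\ge Q$, $P=\alpha(Q)$, $R=N_S(P)$, $P$ is fully normalized in $N_{\mathcal{F}}(Q)$, and $|R|\ge|N_S(U)|$ for all $U\in Q^{\mathcal{F}}\smallsetminus\{Q\}$.
   Context: A fusion system $\mathcal{F}$ over a finite $p$-group $S$ is a category whose objects are the subgroups of $S$, with $\mathrm{Hom}_S(P,Q)\subseteq\mathrm{Hom}_{\mathcal{F}}(P,Q)\subseteq\mathrm{Inj}(P,Q)$, every morphism an isomorphism in $\mathcal{F}$ followed by an inclusion; saturation is given by Puig's Sylow and extension axioms. $Q^{\mathcal{F}}$ is the set of subgroups $\mathcal{F}$-conjugate (isomorphic in $\mathcal{F}$) to $Q$; $Q$ is weakly closed if $Q^{\mathcal{F}}=\{Q\}$. $\mathcal{E}_{\mathcal{F}}$ is the set of $\mathcal{F}$-essential subgroups: $\mathcal{F}$-centric, fully normalized subgroups $P$ such that $\mathrm{Aut}_{\mathcal{F}}(P)/\mathrm{Inn}(P)$ has a strongly $p$-embedded subgroup. $N_{\mathcal{F}}(Q)$ is the fusion system over $N_S(Q)$ whose morphisms $P\to R$ are restrictions of $\varphi\in\mathrm{Hom}_{\mathcal{F}}(PQ,RQ)$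 with $\varphi(P)\le R$, $\varphi(Q)=Q$; a subgroup $X$ is fully normalized in it if $|N_{N_S(Q)}(X)|\ge|N_{N_S(Q)}(Y)|$ for all $Y$ conjugate to $X$ in $N_{\mathcal{F}}(Q)$. *)

(* Defs.v *)
From mathcomp Require Import all_boot all_fingroup.
From mathcomp Require Import pgroup.
Set Implicit Arguments. Unset Strict Implicit. Unset Printing Implicit Defensive.
Local Open Scope group_scope.

Section Fusion.
Variable gT : finGroupType.

(* A morphism of the fusion system with domain P is represented by a finite
   function gT -> gT, normalized to be the identity outside P.  A fusion
   system over S is given by the boolean predicate [hom P phi] meaning
   "phi ∈ Hom_F(P, S)"; then Hom_F(P,Q) = {phi | hom P phi, phi(P) <= Q}. *)
Definition restr (P : {set gT}) (f : gT -> gT) : {ffun gT -> gT} :=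
  [ffun x => if x \in P then f x else x].

Definition finv_on (P : {set gT}) (phi : {ffun gT -> gT}) (y : gT) : gT :=
  odflt y [pick x in P | phi x == y].

Definition fusion_system (S : {set gT})
    (hom : {set gT} -> {ffun gT -> gT} -> bool) : Prop :=
  [/\
      (forall P phi, hom P phi ->
        [/\ group_set P /\ P \subset S, ({in P &, {morph phi : x y / x * y}}),
            ({in P &, injective phi}), phi @: P \subset S
          & forall x, x \notin P -> phi x = x]),
      (forall (P : {group gT}) g, P \subset S -> g \in S ->
        hom P (restr P (fun x => x ^ g))),
      (forall P phi psi, hom P phi -> hom (phi @: P) psi ->
        hom P (restr P (fun x => psi (phi x)))),
      (forall P phi (P' : {group gT}), hom P phi -> P' \subset P ->
        hom P' (restr P' phi))
    &
      (forall P phi, hom P phi ->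
        hom (phi @: P) (restr (phi @: P) (finv_on P phi)))].

Variable S : {set gT}.
Variable hom : {set gT} -> {ffun gT -> gT} -> bool.

Definition fconj (P Q : {set gT}) : bool := [exists phi, hom P phi && (phi @: P == Q)].

Definition fully_normalized (P : {set gT}) : bool :=
  [forall Q : {set gT}, fconj P Q ==> (#|'N_S(Q)| <= #|'N_S(P)|)].

Definition fully_centralized (P : {set gT}) : bool :=
  [forall Q : {set gT}, fconj P Q ==> (#|'C_S(Q)| <= #|'C_S(P)|)].

Definition centric (P : {set gT}) : bool :=
  [forall Q : {set gT}, fconj P Q ==> ('C_S(Q) \subset Q)].

(* Aut_F(P), Aut_S(P), Inn(P) as groups of permutations of gT
   (identity outside P) *)
Definition AutF (P : {set gT}) : {set {perm gT}} :=
  [set s : {perm gT} | hom P [ffun x => s x] && (s @: P == P)].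

Definition conj_on (P : {set gT}) (g : gT) (s : {perm gT}) : bool :=
  [forall x, s x == (if x \in P then x ^ g else x)].

Definition AutS (P : {set gT}) : {set {perm gT}} :=
  [set s : {perm gT} | [exists g in 'N_S(P), conj_on P g s]].

Definition InnP (P : {set gT}) : {set {perm gT}} :=
  [set s : {perm gT} | [exists g in P, conj_on P g s]].

Definition Nphi (P : {set gT}) (phi : {ffun gT -> gT}) : {set gT} :=
  [set g in 'N_S(P) | [exists h in 'N_S(phi @: P),
                        [forall y in P, phi (y ^ g) == (phi y) ^ h]]].

Definition saturated (p : nat) : Prop :=
  (forall P : {set gT}, P \subset S -> group_set P -> fully_normalized P ->
     fully_centralized P /\ p.-Sylow(AutF P) (AutS P)) /\
  (forall P phi, hom P phi -> fully_centralized (phi @: P) ->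
     exists psi, hom (Nphi P phi) psi && [forall x in P, psi x == phi x]).

End Fusion.

Definition strongly_p_embedded (T : finGroupType) (p : nat) (G H : {set T}) : bool :=
  [&& H \proper G, p %| #|H| &
      [forall x in G :\: H, ~~ (p %| #|H :&: H :^ x|)]].

Definition has_strongly_p_embedded (T : finGroupType) (p : nat) (G : {set T}) : Prop :=
  exists H : {group T}, strongly_p_embedded p G H.

Section Essential.
Variables (gT : finGroupType) (S : {set gT}) (hom : {set gT} -> {ffun gT -> gT} -> bool).

Definition essential (p : nat) (P : {set gT}) : Prop :=
  [/\ P \subset S, group_set P, centric S hom P, fully_normalized S hom P
    & has_strongly_p_embedded p (AutF hom P / InnP P)].

(* X (<= N_S(Q)) is fully normalized in N_F(Q): compare |N_{N_S(Q)}(X)| with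
   |N_{N_S(Q)}(Y)| for all Y = phi(X), phi ∈ Hom_F(XQ, N_S(Q)Q) with phi(Q) = Q *)
Definition fully_normalized_in_NF (Q X : {set gT}) : Prop :=
  X \subset 'N_S(Q) /\
  forall phi, hom (X * Q) phi -> phi @: Q = Q ->
    #|'N_('N_S(Q))(phi @: X)| <= #|'N_('N_S(Q))(X)|.

End Essential.

(* Main.v *)
Require Import Defs.
From mathcomp Require Import all_boot all_fingroup all_solvable zify.
From Stdlib Require Import Classical.
From mathcomp Require Import pgroup.
Set Implicit Arguments. Unset Strict Implicit. Unset Printing Implicit Defensive.
Local Open Scope group_scope.

Lemma SE_abstract (G : finGroupType) (p : nat) (D Sg I K : {group G}) :
  prime p -> I <| D -> I \subset Sg -> p.-Sylow(D) Sg -> Sg \subset K ->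
  K \subset D -> K :!=: D -> ~~ (Sg \subset I) ->
  (forall y, y \in D -> ~~ (Sg :&: Sg :^ y \subset I) -> y \in K) ->
  strongly_p_embedded p (D / I) (K / I).
Proof.
move=> pr nID sIS sylS sSK sKD neKD nSI hyp.
have sID := normal_sub nID.
have sDN := normal_norm nID.
have sKN : K \subset 'N(I) := subset_trans sKD sDN.
have sSN : Sg \subset 'N(I) := subset_trans sSK sKN.
have sIK : I \subset K := subset_trans sIS sSK.
have nIK : I <| K := normalS sIK sKD nID.
have nIS : I <| Sg := normalS sIS (subset_trans sSK sKD) nID.
have pS := pHall_pgroup sylS.
apply/and3P; split.
- rewrite properEneq quotientS // andbT; apply/eqP => eq.
  by move/eqP: neKD; apply; apply: quotient_inj eq.
- have ne1 : (Sg / I) != 1 by rewrite quotient_neq1 // properE sIS.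
  have [_ pd _] := pgroup_pdiv (quotient_pgroup I pS) ne1.
  exact: dvdn_trans pd (cardSg (quotientS I sSK)).
apply/forall_inP => x /setDP [Dx nKx].
case/morphimP: Dx => y Ny Dy def_x; rewrite def_x in nKx *.
have nKy : y \notin K by apply: contra nKx => Ky; apply: mem_quotient.
rewrite -quotientJ // -quotientIG; last by rewrite -(normP Ny) conjSg.
set M := (K :&: K :^ y)%G.
have sIM : I \subset M by rewrite subsetI sIK -(normP Ny) conjSg.
have sMN : M \subset 'N(I) := subset_trans (subsetIl _ _) sKN.
rewrite (card_quotient sMN); apply/negP => pM.
have pI : p.-group I := pgroupS sIS pS.
have [W sylW sIW] := Sylow_superset sIM pI.
have nWI : ~~ (W \subset I).
  apply/negP => sWI.
  have eWI : W :=: I by apply/eqP; rewrite eqEsubset sWI.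
  case/and3P: sylW => _ _; rewrite eWI p'natE // => /negP; exact.
have pW := pHall_pgroup sylW.
have sWM := pHall_sub sylW.
have sWK : W \subset K := subset_trans sWM (subsetIl _ _).
have sWKy : W \subset K :^ y := subset_trans sWM (subsetIr _ _).
have sylSK := pHall_subl sSK sKD sylS.
have [k Kk sWkS] := Sylow_Jsub sylSK sWK pW.
have sWy : W :^ y^-1 \subset K by rewrite sub_conjgV.
have pWy : p.-group (W :^ y^-1) by rewrite pgroupJ.
have [k' Kk' sWk'S] := Sylow_Jsub sylSK sWy pWy.
set z := k^-1 * y^-1 * k'.
have Dk : k \in D := subsetP sKD k Kk.
have Dk' : k' \in D := subsetP sKD k' Kk'.
have Dz : z^-1 \in D by rewrite groupV /z !groupM ?groupV.
have : z^-1 \in K.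
  apply: (hyp _ Dz); apply/negP => sub.
  have sub2 : W :^ k \subset Sg :&: Sg :^ z^-1.
    by rewrite subsetI sWkS /= -sub_conjgV invgK -conjsgM /z !mulgA mulgV mul1g conjsgM.
  move/negP: nWI; apply.
  rewrite -(conjSg _ _ k) (normP (subsetP sDN k Dk)).
  exact: subset_trans sub2 sub.
rewrite groupV /z => Kz.
have : y^-1 \in K.
  have -> : y^-1 = k * (k^-1 * y^-1 * k') * k'^-1 by rewrite !mulgA mulgV mul1g mulgK.
  apply: groupM; last by rewrite groupV.
  by apply: groupM.
by rewrite groupV (negPf nKy).
Qed.

Section Basics.
Variables (gT : finGroupType) (S : {group gT}) (hom : {set gT} -> {ffun gT -> gT} -> bool).
Hypothesis FS : fusion_system S hom.

Lemma homP P phi : hom P phi ->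
  [/\ group_set P /\ P \subset S, {in P &, {morph phi : x y / x * y}},
      {in P &, injective phi}, phi @: P \subset S
    & forall x, x \notin P -> phi x = x].
Proof. by case: FS => H _ _ _ _; apply: H. Qed.

Lemma hom_conj (P : {group gT}) g : P \subset S -> g \in S ->
  hom P (restr P (fun x => x ^ g)).
Proof. by case: FS => _ H _ _ _; apply: H. Qed.

Lemma hom_compose P phi psi : hom P phi -> hom (phi @: P) psi ->
  hom P (restr P (fun x => psi (phi x))).
Proof. by case: FS => _ _ H _ _; apply: H. Qed.

Lemma hom_restr P phi (P' : {group gT}) : hom P phi -> P' \subset P ->
  hom P' (restr P' phi).
Proof. by case: FS => _ _ _ H _; apply: H. Qed.

Lemma hom_finv P phi : hom P phi ->
  hom (phi @: P) (restr (phi @: P) (finv_on P phi)).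
Proof. by case: FS => _ _ _ _ H; apply: H. Qed.

Lemma hom_gs P phi : hom P phi -> group_set P.
Proof. by case/homP => [[]]. Qed.

Lemma hom_sub P phi : hom P phi -> P \subset S.
Proof. by case/homP => [[]]. Qed.

Lemma hom_out P phi x : hom P phi -> x \notin P -> phi x = x.
Proof. by case/homP => _ _ _ _; apply. Qed.

Lemma hom_inj P phi : hom P phi -> {in P &, injective phi}.
Proof. by case/homP. Qed.

Lemma hom_imsub P phi : hom P phi -> phi @: P \subset S.
Proof. by case/homP. Qed.

Lemma hom_morph P phi : hom P phi ->
  exists (G : {group gT}) (f : {morphism G >-> gT}),
    [/\ P = G, forall x, f x = phi x & 'injm f].
Proof.
case/homP => [[gP sPS] mP iP _ _].
exists (Group gP); exists (@Morphism _ _ (Group gP) phi mP); split => //.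
by apply/injmP.
Qed.

Lemma hom_img_group P phi : hom P phi -> group_set (phi @: P).
Proof.
move/hom_morph => [G [f [-> fE _]]].
have -> : phi @: G = f @* G by rewrite morphimEdom; apply: eq_imset => x; rewrite fE.
exact: groupP.
Qed.

Lemma restr_id P phi : hom P phi -> restr P phi = phi.
Proof.
move=> h; apply/ffunP => x; rewrite /restr ffunE; case: ifP => // /negbT.
by move/(hom_out h).
Qed.

Lemma hom_comp P R phi psi : hom P phi -> hom R psi -> phi @: P \subset R ->
  hom P (restr P (fun x => psi (phi x))).
Proof.
move=> hp hr sub.
have gs := hom_img_group hp.
have := hom_compose hp (hom_restr (P' := Group gs) hr sub).
congr hom; apply/ffunP => x; rewrite /restr !ffunE; case: ifP => // Px.
have Hx : phi x \in Group gs := imset_f phi Px.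
by rewrite Hx.
Qed.

Lemma comp_img P (phi psi : gT -> gT) :
  (restr P (fun x => psi (phi x))) @: P = psi @: (phi @: P).
Proof.
rewrite -imset_comp; apply: eq_in_imset => x Px; by rewrite ffunE Px.
Qed.

Lemma hom_inv P phi : hom P phi -> exists phi',
  [/\ hom (phi @: P) phi', {in P, forall x, phi' (phi x) = x} & phi' @: (phi @: P) = P].
Proof.
move=> h; exists (restr (phi @: P) (finv_on P phi)).
have inv : {in P, forall x, restr (phi @: P) (finv_on P phi) (phi x) = x}.
  move=> x Px; rewrite ffunE imset_f // /finv_on.
  case: pickP => [x' /andP [Px' /eqP e] | none] /=.
    exact: (hom_inj h Px' Px e).
  by have := none x; rewrite Px eqxx.
split => //; first exact: hom_finv.
by rewrite -imset_comp (eq_in_imset (g := id)) ?imset_id.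
Qed.

Lemma fconjP P R : reflect (exists phi, hom P phi /\ phi @: P = R) (fconj hom P R).
Proof.
apply: (iffP existsP) => [[phi /andP [h /eqP e]] | [phi [h e]]]; exists phi => //.
by rewrite h e eqxx.
Qed.

Lemma fconj_refl (P : {group gT}) : P \subset S -> fconj hom P P.
Proof.
move=> sPS; apply/fconjP; exists (restr P (fun x => x ^ 1)); split.
  exact: hom_conj.
rewrite (eq_in_imset (g := id)) ?imset_id // => x Px.
by rewrite ffunE Px conjg1.
Qed.

Lemma fconj_sym P R : fconj hom P R -> fconj hom R P.
Proof.
case/fconjP => phi [h <-]; have [phi' [h' _ e']] := hom_inv h.
by apply/fconjP; exists phi'.
Qed.

Lemma fconj_trans P R T : fconj hom P R -> fconj hom R T -> fconj hom P T.
Proof.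
case/fconjP => phi [h <-]; case/fconjP => psi [h' <-].
apply/fconjP; exists (restr P (fun x => psi (phi x))); split.
  exact: hom_compose.
exact: comp_img.
Qed.

Lemma fconj_grp P R : fconj hom P R ->
  [/\ group_set P, P \subset S, group_set R & R \subset S].
Proof.
case/fconjP => phi [h <-]; split.
- exact: hom_gs h.
- exact: hom_sub h.
- exact: hom_img_group.
- exact: hom_imsub.
Qed.


Definition toperm (f : {ffun gT -> gT}) : {perm gT} :=
  match @injectiveP gT gT (fun x => f x) with ReflectT h => perm h | ReflectF _ => 1 end.

Lemma topermE (f : {ffun gT -> gT}) : injective f -> toperm f =1 f.
Proof.
move=> inj x; rewrite /toperm; case: (@injectiveP gT gT (fun x => f x)) => [h | n]; first by rewrite permE.
by case: n.
Qed.

Lemma aut_inj P phi : hom P phi -> phi @: P = P -> injective phi.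
Proof.
move=> h e x y.
have mapP z : z \in P -> phi z \in P by move=> Pz; rewrite -e imset_f.
case Px: (x \in P); case Py: (y \in P).
- exact: (hom_inj h Px Py).
- rewrite (hom_out h (negbT Py)) => exy; by move: (mapP _ Px); rewrite exy Py.
- rewrite (hom_out h (negbT Px)) => exy; by move: (mapP _ Py); rewrite -exy Px.
- by rewrite (hom_out h (negbT Px)) (hom_out h (negbT Py)).
Qed.

Lemma toperm_ffun P phi : hom P phi -> phi @: P = P ->
  [ffun x => toperm phi x] = phi.
Proof. by move=> h e; apply/ffunP => x; rewrite ffunE (topermE (aut_inj h e)). Qed.

Lemma toperm_AutF P phi : hom P phi -> phi @: P = P -> toperm phi \in AutF hom P.
Proof.
move=> h e; rewrite inE (toperm_ffun h e) h /=; apply/eqP; rewrite -{2}e.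
by apply: eq_imset => x; rewrite (topermE (aut_inj h e)).
Qed.

Lemma AutF_hom (P : {set gT}) (s : {perm gT}) : s \in AutF hom P -> hom P [ffun x => s x] /\ s @: P = P.
Proof. by rewrite inE => /andP [h /eqP]. Qed.

Lemma AutF_out (P : {set gT}) (s : {perm gT}) (x : gT) : s \in AutF hom P -> x \notin P -> s x = x.
Proof.
by case/AutF_hom => h _ /(hom_out h); rewrite ffunE.
Qed.

Lemma AutF_mem (P : {set gT}) (s : {perm gT}) (x : gT) : s \in AutF hom P -> (s x \in P) = (x \in P).
Proof. by case/AutF_hom => _ e; rewrite -{1}e mem_imset //; apply: perm_inj. Qed.

Lemma AutF_gs (P : {group gT}) : P \subset S -> group_set (AutF hom P).
Proof.
move=> sPS; apply/group_setP; split.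
  rewrite inE.
  have -> : [ffun x => (1 : {perm gT}) x] = restr P (fun x => x ^ 1).
    by apply/ffunP => x; rewrite /restr !ffunE perm1 conjg1; case: ifP.
  rewrite hom_conj ?group1 //=; apply/eqP.
  by rewrite (eq_imset (g := id)) ?imset_id // => x; rewrite perm1.
move=> s t sA tA; have [hs es] := AutF_hom sA; have [ht et] := AutF_hom tA.
rewrite inE.
have -> : [ffun x => (s * t) x] =
          restr P (fun x => [ffun x => t x] ([ffun x => s x] x)).
  apply/ffunP => x; rewrite /restr !ffunE permM; case: ifP => // /negbT Px.
  by rewrite (AutF_out sA Px) (AutF_out tA Px).
have es' : [ffun x => s x] @: P = P by rewrite -{2}es; apply: eq_imset => x; rewrite ffunE.
rewrite hom_compose //=; last by rewrite es'.
apply/eqP; rewrite (eq_imset (g := t \o s)); last by move=> x; rewrite permM.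
by rewrite imset_comp es et.
Qed.

Lemma conj_onP (P : {set gT}) (g : gT) (s : {perm gT}) :
  reflect (forall x, s x = if x \in P then x ^ g else x) (conj_on P g s).
Proof. by apply: (iffP forallP) => h x; [apply/eqP | apply/eqP]. Qed.

Lemma conj_on_mul (P : {group gT}) (g h : gT) (s t : {perm gT}) : g \in 'N(P) ->
  conj_on P g s -> conj_on P h t -> conj_on P (g * h) (s * t).
Proof.
move=> Ng /conj_onP cs /conj_onP ct; apply/conj_onP => x.
rewrite permM cs; case: ifP => Px; last by rewrite ct Px.
by rewrite ct memJ_norm // Px conjgM.
Qed.

Lemma conj_on1 (P : {set gT}) : conj_on P 1 1.
Proof. by apply/conj_onP => x; rewrite perm1; case: ifP; rewrite ?conjg1. Qed.

Lemma AutS_gs (P : {group gT}) : group_set (AutS S P).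
Proof.
apply/group_setP; split.
  by rewrite inE; apply/exists_inP; exists 1; rewrite ?group1 ?conj_on1.
move=> s t; rewrite !inE => /exists_inP [g Ng cs] /exists_inP [h Nh ct].
apply/exists_inP; exists (g * h); first exact: groupM.
by apply: conj_on_mul => //; case/setIP: Ng.
Qed.

Lemma InnP_gs (P : {group gT}) : group_set (InnP P).
Proof.
apply/group_setP; split.
  by rewrite inE; apply/exists_inP; exists 1; rewrite ?group1 ?conj_on1.
move=> s t; rewrite !inE => /exists_inP [g Ng cs] /exists_inP [h Nh ct].
apply/exists_inP; exists (g * h); first exact: groupM.
by apply: conj_on_mul => //; apply: (subsetP (normG P)).
Qed.

Lemma conj_on_ffun (P : {group gT}) (g : gT) (s : {perm gT}) : conj_on P g s ->
  [ffun x => s x] = restr P (fun x => x ^ g).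
Proof. by move/conj_onP => c; apply/ffunP => x; rewrite /restr !ffunE c. Qed.

Lemma conj_on_img (P : {group gT}) (g : gT) (s : {perm gT}) : g \in 'N(P) -> conj_on P g s -> s @: P = P.
Proof.
move=> Ng /conj_onP c; rewrite -{2}(normP Ng) /conjugate.
by apply: eq_in_imset => x Px; rewrite c Px.
Qed.

Lemma AutS_sub (P : {group gT}) : P \subset S -> AutS S P \subset AutF hom P.
Proof.
move=> sPS; apply/subsetP => s; rewrite inE => /exists_inP [g /setIP [Sg Ng] cs].
rewrite inE (conj_on_ffun cs) hom_conj //= (conj_on_img Ng cs) eqxx //.
Qed.

Lemma InnP_sub (P : {group gT}) : P \subset S -> InnP P \subset AutS S P.
Proof.
move=> sPS; apply/subsetP => s; rewrite !inE => /exists_inP [g Pg cs].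
apply/exists_inP; exists g => //.
by rewrite inE (subsetP sPS g Pg) (subsetP (normG P) g Pg).
Qed.

Lemma AutF_conj (P : {group gT}) (s : {perm gT}) (x y : gT) : s \in AutF hom P -> x \in P -> y \in P ->
  s (x ^ y) = s x ^ s y.
Proof.
case/AutF_hom => h _ Px Py.
have [G [f [eP fE _]]] := hom_morph h.
rewrite eP in Px Py.
by have := morphJ f Px Py; rewrite !fE !ffunE.
Qed.

Lemma InnP_norm (P : {group gT}) : P \subset S -> AutF hom P \subset 'N(InnP P).
Proof.
move=> sPS; apply/subsetP => c cA; rewrite inE.
apply/subsetP => _ /imsetP [s Is ->].
move: Is; rewrite !inE => /exists_inP [g Pg /conj_onP cs].
apply/exists_inP; exists (c g); first by rewrite AutF_mem.
apply/conj_onP => x.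
rewrite -{1}(permKV c x) permJ cs.
set w := c^-1 x.
have ex : x = c w by rewrite /w permKV.
rewrite ex AutF_mem //.
case: ifP => Pw //.
by rewrite (AutF_conj cA Pw Pg).
Qed.

Lemma InnP_normal (P : {group gT}) : P \subset S -> InnP P <| AutF hom P.
Proof.
move=> sPS; rewrite /normal InnP_norm // andbT.
exact: subset_trans (InnP_sub sPS) (AutS_sub sPS).
Qed.

Lemma Nphi_N P phi : Nphi S P phi \subset 'N_S(P).
Proof. by apply/subsetP => g; rewrite inE => /andP []. Qed.

Lemma Nphi_P P phi : hom P phi -> P \subset Nphi S P phi.
Proof.
move=> h; have [G [f [eP fE _]]] := hom_morph h; subst P.
have sGS := hom_sub h.
have eI : phi @: G = f @* G by rewrite morphimEdom; apply: eq_imset => x; rewrite fE.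
apply/subsetP => g Pg; rewrite inE inE (subsetP sGS g Pg) (subsetP (normG G) g Pg) /=.
apply/exists_inP; exists (phi g).
  have fg : phi g \in f @* G by rewrite -fE; apply: mem_morphim.
  rewrite eI inE (subsetP (normG _) _ fg) andbT.
  by move: fg; rewrite -eI; apply: (subsetP (hom_imsub h)).
by apply/forall_inP => y Py; rewrite -!fE morphJ.
Qed.

Lemma Nphi_C P phi : hom P phi -> 'C_S(P) \subset Nphi S P phi.
Proof.
move=> h; apply/subsetP => g /setIP [Sg Cg]; rewrite inE.
rewrite inE Sg (subsetP (cent_sub P) g Cg) /=.
apply/exists_inP; exists 1; first by rewrite group1.
apply/forall_inP => y Py; rewrite conjg1.
have -> : y ^ g = y by rewrite conjgE -(centP Cg y Py) mulKg.
by [].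
Qed.


Lemma hom_ext P phi (psi : {ffun gT -> gT}) : hom P phi ->
  {in P, forall x, psi x = phi x} -> (forall x, x \notin P -> psi x = x) -> hom P psi.
Proof.
move=> h e1 e2; suff -> : psi = phi by [].
apply/ffunP => x; case Px: (x \in P); first by rewrite e1.
by rewrite e2 ?Px // (hom_out h) ?Px.
Qed.

Lemma restr_in (P : {set gT}) (f : gT -> gT) (x : gT) : x \in P -> restr P f x = f x.
Proof. by move=> Px; rewrite ffunE Px. Qed.

Lemma restr_out (P : {set gT}) (f : gT -> gT) (x : gT) : x \notin P -> restr P f x = x.
Proof. by move=> Px; rewrite ffunE (negbTE Px). Qed.

Lemma hom_comp2 P R phi (psi : {ffun gT -> gT}) (chi : gT -> gT) :
  hom P phi -> hom R psi -> phi @: P \subset R -> {in P, forall x, chi x = psi (phi x)} ->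
  hom P (restr P chi).
Proof.
move=> hp hr sub e; apply: hom_ext (hom_comp hp hr sub) _ _.
  by move=> x Px; rewrite !restr_in // e.
by move=> x Px; rewrite restr_out.
Qed.

End Basics.



Section Saturation.
Variables (gT : finGroupType) (p : nat) (S : {group gT})
  (hom : {set gT} -> {ffun gT -> gT} -> bool).
Hypothesis FS : fusion_system S hom.
Hypothesis Sat : saturated S hom p.
Hypothesis pS : p.-group S.

Lemma sylow_ax (P : {group gT}) : P \subset S -> fully_normalized S hom P ->
  fully_centralized S hom P /\ p.-Sylow(AutF hom P) (AutS S P).
Proof. by case: Sat => H _ sPS fn; apply: H => //; apply: groupP. Qed.

Lemma ext_ax P phi : hom P phi -> fully_centralized S hom (phi @: P) ->
  exists psi, hom (Nphi S P phi) psi /\ {in P, forall x, psi x = phi x}.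
Proof.
case: Sat => _ H h fc; have [psi /andP [hp /forall_inP e]] := H P phi h fc.
by exists psi; split => // x Px; apply/eqP; apply: e.
Qed.

Definition AutFG (P : {group gT}) (sPS : P \subset S) : {group {perm gT}} :=
  Group (AutF_gs FS sPS).
Definition AutSG (P : {group gT}) : {group {perm gT}} := Group (AutS_gs S P).
Definition InnPG (P : {group gT}) : {group {perm gT}} := Group (InnP_gs P).

Lemma receiving (R1 : {group gT}) V sigma : R1 \subset S ->
  fully_normalized S hom R1 -> hom V sigma -> sigma @: V = R1 ->
  exists chi, hom ('N_S(V)) chi /\ chi @: V = R1.
Proof.
move=> sR1S fn hsig esig.
have [fc syl] := sylow_ax sR1S fn.
have [VG [fV [eV _ _]]] := hom_morph FS hsig.
rewrite eV in hsig esig *.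
have [sig' [h' inv' e']] := hom_inv FS hsig.
rewrite esig in h' e'.
have sVS := hom_sub FS hsig.
pose tau g := restr R1 (fun x => sigma ((sig' x) ^ g)).
have sig'V x : x \in R1 -> sig' x \in VG by move=> Rx; rewrite -e' imset_f.
have sigR x : x \in VG -> sigma x \in R1 by move=> Vx; rewrite -esig imset_f.
have htau g : g \in 'N_S(VG) -> hom R1 (tau g) /\ tau g @: R1 = R1.
  case/setIP => Sg Ng.
  have hc := hom_conj FS sVS Sg.
  have hc1 : hom R1 (restr R1 (fun x => restr VG (fun y => y ^ g) (sig' x))).
    apply: (hom_comp2 FS h' hc) => //.
    by rewrite e'.
  have ec1 : restr R1 (fun x => restr VG (fun y => y ^ g) (sig' x)) @: R1 = VG.
    rewrite comp_img e'; transitivity (VG :^ g); last exact: normP Ng.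
    by apply: eq_in_imset => y Vy; rewrite restr_in.
  have ht : hom R1 (tau g).
    apply: (hom_comp2 FS hc1 hsig); first by rewrite ec1.
    by move=> x Rx; rewrite !restr_in // sig'V.
  split => //.
  have e2 : (fun x => sig' x ^ g) @: R1 = VG.
    rewrite -(normP Ng) -e' /conjugate -imset_comp.
    by apply: eq_imset.
  by rewrite comp_img e2.
pose F g := toperm (tau g).
have tauE g x : x \in R1 -> tau g x = sigma ((sig' x) ^ g) by move=> Rx; rewrite restr_in.
have FE g x : g \in 'N_S(VG) -> F g x = tau g x.
  by move=> Ng; case: (htau g Ng) => ht et; rewrite /F (topermE (aut_inj FS ht et)).
have FM : {in 'N_S(VG) &, {morph F : g h / g * h}}.
  move=> g h Ng Nh; apply/permP => x.
  rewrite permM !FE ?groupM //.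
  case Rx: (x \in R1); last first.
    by rewrite !restr_out ?Rx.
  have Ng' : g \in 'N(VG) by case/setIP: Ng.
  have Vxg : sig' x ^ g \in VG by rewrite memJ_norm // sig'V.
  by rewrite !tauE // ?sigR // inv' // conjgM.
pose FF := @Morphism _ _ ('N_S(VG)) F FM.
have sFA : FF @* 'N_S(VG) \subset AutFG sR1S.
  apply/subsetP => _ /morphimP [g _ Ng ->] /=.
  by case: (htau g Ng) => ht et; apply: (toperm_AutF FS).
have pF : p.-group (FF @* 'N_S(VG)).
  by apply: morphim_pgroup; apply: pgroupS pS; apply: subsetIl.
have [a aA sFa] := Sylow_Jsub (G := AutFG sR1S) (P := AutSG R1) syl sFA pF.
have [ha ea] := AutF_hom aA.
pose chi0 := restr VG (fun x => a (sigma x)).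
have hchi0 : hom VG chi0.
  apply: (hom_comp2 FS hsig ha); first by rewrite esig.
  by move=> x Vx; rewrite ffunE.
have echi0 : chi0 @: VG = R1 by rewrite comp_img esig ea.
have sN : 'N_S(VG) \subset Nphi S VG chi0.
  apply/subsetP => g Ng; rewrite inE Ng /=.
  have Fga : F g ^ a \in AutSG R1.
    apply: (subsetP sFa); rewrite memJ_conjg; exact: mem_morphim.
  move: Fga; rewrite inE => /exists_inP [h Nh /conj_onP ch].
  apply/exists_inP; exists h; first by rewrite echi0.
  apply/forall_inP => y Vy.
  have Ng' : g \in 'N(VG) by case/setIP: Ng.
  have Vyg : y ^ g \in VG by rewrite memJ_norm.
  rewrite !restr_in //.
  have := ch (a (sigma y)); rewrite permJ FE // tauE ?sigR // inv' //.
  rewrite (AutF_mem _ aA) sigR // => ->; exact: eqxx.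
have eN : Nphi S VG chi0 = 'N_S(VG).
  by apply/eqP; rewrite eqEsubset sN Nphi_N.
have fc0 : fully_centralized S hom (chi0 @: VG) by rewrite echi0.
have [psi [hpsi epsi]] := ext_ax hchi0 fc0.
exists psi; split; first by rewrite -eN.
by rewrite -echi0; apply: eq_in_imset.
Qed.

End Saturation.

Section LemmaA.
Variables (gT : finGroupType) (p : nat) (S Q : {group gT})
  (hom : {set gT} -> {ffun gT -> gT} -> bool).
Hypothesis FS : fusion_system S hom.
Hypothesis Sat : saturated S hom p.
Hypothesis pS : p.-group S.
Hypothesis pr : prime p.
Hypothesis nQS : Q <| S.

Definition Concl n := exists (R' : {set gT}) (a : {ffun gT -> gT}),
  [/\ R' = S \/ essential S hom p R', hom R' a, a @: R' = R', Q \subset R'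
    & (a @: Q != Q) /\ n <= #|R'|].

Lemma Concl_mono m n : Concl m -> n <= m -> Concl n.
Proof.
move=> [R' [a [h1 h2 h3 h4 [h5 h6]]]] nm; exists R', a; split => //; split => //.
exact: leq_trans nm h6.
Qed.

Lemma final (R1 : {group gT}) (b : {ffun gT -> gT}) :
  R1 \subset S -> fully_normalized S hom R1 -> Q \subset R1 ->
  hom R1 b -> b @: R1 = R1 -> b @: Q != Q ->
  (forall R' psi', hom R' psi' -> Q \subset R' -> psi' @: Q != Q ->
     #|R1| < #|R'| -> Concl #|R'|) ->
  Concl #|R1|.
Proof.
move=> sR1S fn sQR1 hb eb nbQ IH.
have [fc syl] := sylow_ax Sat sR1S fn.
case: (eqVneq (R1 : {set gT}) S) => [eRS | neRS].
  by exists R1, b; split => //; left.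
have prR1 : R1 \proper S by rewrite properEneq neRS.
case: (classic (exists g : {ffun gT -> gT},
   [/\ hom R1 g, g @: R1 = R1, g @: Q != Q & ~~ (Nphi S R1 g \subset R1)]))
   => [[g [hg eg ngQ nsub]] | H0].
  have fcg : fully_centralized S hom (g @: R1) by rewrite eg.
  have [psi' [hpsi epsi]] := ext_ax Sat hg fcg.
  have sRN := Nphi_P FS hg.
  have ltc : #|R1| < #|Nphi S R1 g| by apply: proper_card; rewrite properE sRN.
  have eQ : psi' @: Q = g @: Q.
    by apply: eq_in_imset => x Qx; apply: epsi; apply: (subsetP sQR1).
  have nQ' : psi' @: Q != Q by rewrite eQ.
  exact: Concl_mono (IH _ _ hpsi (subset_trans sQR1 sRN) nQ' ltc) (ltnW ltc).
have H0' g : hom R1 g -> g @: R1 = R1 -> g @: Q != Q -> Nphi S R1 g \subset R1.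
  move=> hg eg ng; apply/negPn/negP => ns; apply: H0; by exists g.
exists (R1 : {set gT}), b; split => //; right.
have cR1 : 'C_S(R1) \subset R1 := subset_trans (Nphi_C S hb) (H0' b hb eb nbQ).
split => //; first exact: groupP.
- apply/forallP => V; apply/implyP => cV.
  have [_ _ gV sVS] := fconj_grp FS cV.
  have [phi [hphi ephi]] : exists phi, hom R1 phi /\ phi @: R1 = V by apply/fconjP.
  have [G [f [eG fE injf]]] := hom_morph FS hphi.
  have eV : f @* G = V by rewrite morphimEdom -ephi eG; apply: eq_imset.
  have cZ : #|'Z(V)| = #|'Z(R1)|.
    rewrite -eV -injm_center // card_injm //; first by rewrite eG.
    by rewrite -eG; apply: subsetIl.
  have cC : #|'C_S(V)| <= #|'C_S(R1)|.
    by move/forallP: fc => /(_ V) /implyP /(_ cV).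
  have eCZ : 'C_S(R1) = 'Z(R1).
    apply/eqP; rewrite eqEsubset /center; apply/andP; split; last by apply: setSI.
    by rewrite subsetI cR1 subsetIr.
  have sZC : 'Z(V) \subset 'C_S(V) by rewrite /center; apply: setSI.
  have -> : 'C_S(V) = 'Z(V).
    apply/eqP; rewrite eq_sym eqEcard sZC /= cZ -eCZ; exact: cC.
  exact: subsetIl.
have Kgs : group_set [set s in AutF hom R1 | s @: Q == Q].
  apply/group_setP; split.
    apply/setIdP; split; first exact: (group1 (AutFG FS sR1S)).
    by rewrite (eq_imset (g := id)) ?imset_id // => x; rewrite perm1.
  move=> s t /setIdP [sA /eqP sQ] /setIdP [tA /eqP tQ].
  apply/setIdP; split; first exact: (@groupM _ (AutFG FS sR1S) s t sA tA).
  rewrite (eq_imset (g := t \o s)); last by move=> x; rewrite permM.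
  by rewrite imset_comp sQ tQ.
pose KG := Group Kgs.
exists (KG / InnPG R1)%G.
change (strongly_p_embedded p (AutFG FS sR1S / InnPG R1) (KG / InnPG R1)).
apply: (@SE_abstract _ p (AutFG FS sR1S) (AutSG S R1) (InnPG R1) KG pr).
- exact: (InnP_normal FS sR1S).
- exact: InnP_sub.
- exact: syl.
- apply/subsetP => s sS; apply/setIdP; split; first exact: (subsetP (AutS_sub FS sR1S) s sS).
  move: sS; rewrite inE => /exists_inP [g /setIP [Sg Ng] cs].
  apply/eqP; transitivity (Q :^ g).
    by apply: eq_in_imset => x Qx; rewrite (conj_onP _ _ _ cs) (subsetP sQR1 x Qx).
  exact: normP (subsetP (normal_norm nQS) g Sg).
- by apply/subsetP => s /setIdP [].
- apply/eqP => eKD.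
  have tb := toperm_AutF FS hb eb.
  have : toperm b \in KG by rewrite eKD.
  rewrite inE tb /= => /eqP e.
  move/negP: nbQ; apply; apply/eqP; rewrite -{2}e.
  by apply: eq_imset => x; rewrite (topermE (aut_inj FS hb eb)).
- have [_ [g Ng nRg]] := properP (nilpotent_proper_norm (pgroup_nil pS) prR1).
  have [Sg Ng'] := setIP Ng.
  have hc := hom_conj FS sR1S Sg.
  have ec : restr R1 (fun x => x ^ g) @: R1 = R1.
    transitivity (R1 :^ g); last exact: normP.
    by apply: eq_in_imset => x Rx; rewrite restr_in.
  set c := toperm (restr R1 (fun x => x ^ g)).
  have cc : conj_on R1 g c.
    by apply/conj_onP => x; rewrite (topermE (aut_inj FS hc ec)) ffunE.
  have cS : c \in AutSG S R1 by rewrite inE; apply/exists_inP; exists g.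
  apply/negP => sub; have := subsetP sub c cS; rewrite inE => /exists_inP [h Rh ch].
  have gh : g * h^-1 \in 'C_S(R1).
    rewrite inE (groupM Sg (groupVr (subsetP sR1S h Rh))) /=.
    apply/centP => x Rx.
    have exy : x ^ (g * h^-1) = x.
      have := (conj_onP _ _ _ cc) x; rewrite (conj_onP _ _ _ ch) Rx => e.
      by rewrite conjgM -e conjgK.
    by apply/esym; rewrite conjgC exy.
  have gR := subsetP cR1 _ gh.
  move/negP: nRg; apply.
  by have := groupM gR Rh; rewrite mulgKV.
- move=> y yD nsub.
  rewrite inE yD /=; apply/negPn/negP => nyQ.
  case/subsetPn: nsub => c /setIP [cS cSy] ncI.
  rewrite mem_conjg in cSy.
  have yiA : y^-1 \in AutF hom R1 by rewrite (@groupV _ (AutFG FS sR1S)).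
  have [hyi eyi] := AutF_hom yiA.
  pose gam := [ffun x => y^-1 x].
  have egam : gam @: R1 = R1 by rewrite -{2}eyi; apply: eq_imset => x; rewrite ffunE.
  have ngQ : gam @: Q != Q.
    apply/negP => /eqP e; move/negP: nyQ; apply; apply/eqP.
    have e' : y^-1 @: Q = Q by rewrite -{2}e; apply: eq_imset => x; rewrite ffunE.
    rewrite -{1}e' -imset_comp (eq_imset (g := id)) ?imset_id // => x /=.
    by rewrite permKV.
  have sN := H0' gam hyi egam ngQ.
  move: cS; rewrite inE => /exists_inP [g Ng cg].
  move: cSy; rewrite inE => /exists_inP [h Nh ch].
  have gN : g \in Nphi S R1 gam.
    rewrite inE Ng /=; apply/exists_inP; exists h; first by rewrite egam.
    apply/forall_inP => w Rw; rewrite !ffunE.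
    have := (conj_onP _ _ _ ch) (y^-1 w).
    rewrite permJ (conj_onP _ _ _ cg) Rw (AutF_mem _ yiA) Rw => ->.
    exact: eqxx.
  move/negP: ncI; apply; rewrite inE; apply/exists_inP; exists g => //.
  exact: (subsetP sN).
Qed.


Lemma img3 (P A : {set gT}) (f g h : gT -> gT) : A \subset P ->
  restr P (fun x => f (g (h x))) @: A = f @: (g @: (h @: A)).
Proof.
move=> sAP; rewrite -!imset_comp; apply: eq_in_imset => x Ax.
by rewrite restr_in // (subsetP sAP).
Qed.

Lemma inv_img (P A : {set gT}) (f g : gT -> gT) : A \subset P ->
  {in P, forall x, g (f x) = x} -> g @: (f @: A) = A.
Proof.
move=> sAP inv; rewrite -imset_comp (eq_in_imset (g := id)) ?imset_id //.
by move=> x Ax /=; apply: inv; apply: (subsetP sAP).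
Qed.

Lemma lemmaA R psi : hom R psi -> Q \subset R -> psi @: Q != Q -> Concl #|R|.
Proof.
suff H : forall n (R : {set gT}) (psi : {ffun gT -> gT}), #|S| - #|R| < n -> hom R psi -> Q \subset R ->
    psi @: Q != Q -> Concl #|R|.
  by move=> hR sQR nQ; exact: (H _ _ _ (ltnSn _) hR sQR nQ).
elim=> [|n IHn] {}R {}psi // hn hR sQR nQ.
have IH' : forall (R' : {set gT}) (psi' : {ffun gT -> gT}), hom R' psi' -> Q \subset R' -> psi' @: Q != Q ->
    #|R| < #|R'| -> Concl #|R'|.
  move=> R' psi' h' sQ' n' lt; apply: (IHn R' psi') => //.
  have := subset_leq_card (hom_sub FS h').
  move=> le; move: hn lt le; move: #|S| #|R| #|R'|; clear; move=> a b c; lia.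
have [RG [fR [eR _ _]]] := hom_morph FS hR.
rewrite eR in hR sQR IH' *.
have sRS := hom_sub FS hR.
have cimg : #|psi @: RG| = #|RG| by rewrite (card_in_imset (hom_inj FS hR)).
case: (eqVneq (RG : {set gT}) S) => [eRS | neRS].
  exists (RG : {set gT}), psi; split => //; first by left.
  apply/eqP; rewrite eqEcard cimg leqnn andbT; have := hom_imsub FS hR; by rewrite -eRS.
have prR : RG \proper S by rewrite properEneq neRS.
have ltN : #|RG| < #|'N_S(RG)|.
  exact: proper_card (nilpotent_proper_norm (pgroup_nil pS) prR).
have cRR : fconj hom RG RG := fconj_refl FS sRS.
case: (@arg_maxnP _ (RG : {set gT}) (fconj hom RG) (fun U => #|'N_S(U)|) cRR)
  => R1 cR1 maxR1.
have [_ _ gR1 sR1S] := fconj_grp FS cR1.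
pose R1G := Group gR1.
have fn : fully_normalized S hom R1G.
  apply/forallP => U; apply/implyP => cU; apply: maxR1.
  exact: (@fconj_trans _ _ _ FS RG R1 U cR1 cU).
have [s0 [hs0 es0]] : exists s0, hom RG s0 /\ s0 @: RG = R1 by apply/fconjP.
have [chi [hchi echi]] := receiving FS Sat pS (R1 := R1G) sR1S fn hs0 es0.
change (chi @: RG = R1) in echi.
have sRN : RG \subset 'N_S(RG) by rewrite subsetI sRS normG.
case: (eqVneq (chi @: Q) Q) => [eQ | nQ']; last first.
  exact: Concl_mono (IH' _ _ hchi (subset_trans sQR sRN) nQ' ltN) (ltnW ltN).
have sQR1 : Q \subset R1 by rewrite -eQ -echi imsetS.
have [ps' [hps' invps eps']] := hom_inv FS hR.
have hss : hom (psi @: RG) (restr (psi @: RG) (fun x => s0 (ps' x))).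
  by apply: (hom_comp FS hps' hs0); rewrite eps'.
have ess : restr (psi @: RG) (fun x => s0 (ps' x)) @: (psi @: RG) = R1.
  by rewrite comp_img eps' es0.
pose RsG := Group (hom_img_group FS hR).
have sRsS : RsG \subset S := hom_imsub FS hR.
have [chs [hchs echs]] := receiving FS Sat pS (R1 := R1G) sR1S fn hss ess.
change (chs @: (psi @: RG) = R1) in echs.
have prRs : RsG \proper S.
  rewrite properEcard sRsS /=; have := proper_card prR; by rewrite cimg.
have ltNs : #|RsG| < #|'N_S(RsG)|.
  exact: proper_card (nilpotent_proper_norm (pgroup_nil pS) prRs).
have sRsN : psi @: RG \subset 'N_S(psi @: RG).
  by rewrite subsetI sRsS; apply: (normG RsG).
have sPQ : psi @: Q \subset psi @: RG by apply: imsetS.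
case: (eqVneq (chs @: (psi @: Q)) Q) => [eQs | nQs].
  have [chs' [hchs' invchs echs']] := hom_inv FS hchs.
  have sQT : Q \subset chs @: 'N_S(psi @: RG).
    by rewrite -eQs; apply: imsetS; apply: subset_trans sPQ sRsN.
  have eQT : chs' @: Q = psi @: Q.
    rewrite -{1}eQs; apply: inv_img invchs; exact: subset_trans sPQ sRsN.
  have nQT : chs' @: Q != Q by rewrite eQT.
  have cT : #|chs @: 'N_S(psi @: RG)| = #|'N_S(psi @: RG)|.
    by rewrite (card_in_imset (hom_inj FS hchs)).
  have ltT : #|RG| < #|chs @: 'N_S(psi @: RG)| by rewrite cT -cimg.
  exact: Concl_mono (IH' _ _ hchs' sQT nQT ltT) (ltnW ltT).
have hk := hom_restr FS (P' := RG) hchi sRN.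
have ek : restr RG chi @: RG = R1.
  by rewrite -echi; apply: eq_in_imset => x Rx; rewrite restr_in.
have [ka [hka invka eka]] := hom_inv FS hk.
rewrite ek in hka eka.
have kQ : ka @: Q = Q.
  have e1 : restr RG chi @: Q = Q.
    by rewrite -{2}eQ; apply: eq_in_imset => x Qx; rewrite restr_in // (subsetP sQR).
  by rewrite -{1}e1; apply: inv_img invka.
have h1 : hom R1 (restr R1 (fun x => psi (ka x))).
  by apply: (hom_comp FS hka hR); rewrite eka.
have ei1 : restr R1 (fun x => psi (ka x)) @: R1 = psi @: RG by rewrite comp_img eka.
have hb : hom R1 (restr R1 (fun x => chs (psi (ka x)))).
  apply: (hom_comp2 FS h1 hchs); first by rewrite ei1.
  by move=> x Rx; rewrite restr_in.
have eb : restr R1 (fun x => chs (psi (ka x))) @: R1 = R1.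
  by rewrite img3 // eka echs.
have nb : restr R1 (fun x => chs (psi (ka x))) @: Q != Q.
  by rewrite img3 // kQ.
have cR1G : #|R1G| = #|RG| by rewrite /= -es0 (card_in_imset (hom_inj FS hs0)).
rewrite -cR1G.
apply: (final (R1 := R1G) sR1S fn sQR1 hb eb nb).
by rewrite cR1G.
Qed.

End LemmaA.

Theorem lemma2p5 (gT : finGroupType) (p : nat) (S Q : {group gT})
    (hom : {set gT} -> {ffun gT -> gT} -> bool) :
  prime p -> p.-group S ->
  fusion_system S hom -> saturated S hom p ->
  Q <| S ->
  (exists P : {set gT}, fconj hom Q P /\ P <> Q) ->
  exists (P R : {set gT}) (alpha : {ffun gT -> gT}),
    [/\ fconj hom Q P /\ P <> Q,
        R = S \/ essential S hom p R,
        hom R alpha /\ alpha @: R = R,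
        [/\ Q \subset R, P = alpha @: Q, R = 'N_S(P) & fully_normalized_in_NF S hom Q P]
      & forall U : {set gT}, fconj hom Q U -> U <> Q -> #|'N_S(U)| <= #|R|].
Proof.
move=> pr pS FS Sat nQS [P0 [cP0 nP0]].
have sQS := normal_sub nQS.
have NSQ : 'N_S(Q) = S by apply/setIidPl; exact: normal_norm nQS.
pose Pp := fun U : {set gT} => fconj hom Q U && (U != Q).
have PP0 : Pp P0 by rewrite /Pp cP0; apply/eqP.
case: (@arg_maxnP _ P0 Pp (fun U => #|'N_S(U)|) PP0) => U /andP [cU nUQ] maxU.
have maxP : forall V, fconj hom Q V -> V != Q -> #|'N_S(V)| <= #|'N_S(U)|.
  by move=> V c n; apply: maxU; rewrite /Pp c n.
have fnQ : fully_normalized S hom Q.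
  apply/forallP => V; apply/implyP => _; rewrite NSQ.
  exact: subset_leq_card (subsetIl _ _).
have [sg [hsg esg]] : exists sg, hom U sg /\ sg @: U = Q.
  by have := fconj_sym FS cU; move/fconjP.
have [chi [hchi echi]] := receiving FS Sat pS (R1 := Q) sQS fnQ hsg esg.
have [ci [hci invci eci]] := hom_inv FS hchi.
have [_ _ gU sUS] := fconj_grp FS cU.
have sUN : U \subset 'N_S(U) by rewrite subsetI sUS (normG (Group gU)).
have sQR0 : Q \subset chi @: 'N_S(U) by rewrite -echi imsetS.
have eciQ : ci @: Q = U by rewrite -echi; apply: inv_img invci.
have nci : ci @: Q != Q by rewrite eciQ.
have [R [a [hRE ha ea sQR [naQ leR]]]] := lemmaA FS Sat pS pr nQS hci sQR0 nci.
rewrite (card_in_imset (hom_inj FS hchi)) in leR.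
set P := a @: Q.
have hQ : hom Q (restr Q a) := hom_restr FS (P' := Q) ha sQR.
have cQP : fconj hom Q P.
  apply/fconjP; exists (restr Q a); split => //.
  by apply: eq_in_imset => x Qx; rewrite restr_in.
have sRS := hom_sub FS ha.
have sRNP : R \subset 'N_S(P).
  have [G [f [eG fE injf]]] := hom_morph FS ha.
  rewrite subsetI sRS /=; apply/subsetP => g Rg; rewrite inE.
  have : g \in a @: R by rewrite ea.
  case/imsetP => g' Rg' ->.
  have eP : P = f @* Q.
    rewrite morphimEsub; last by rewrite -eG.
    by apply: eq_imset => x; rewrite fE.
  rewrite eP -fE -morphimJ; last by rewrite -eG.
  rewrite (normP (subsetP (normal_norm nQS) g' (subsetP sRS g' Rg'))).
  exact: subxx.
have eR : R = 'N_S(P).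
  apply/eqP; rewrite eqEcard sRNP /=.
  exact: leq_trans (maxP P cQP naQ) leR.
exists P, R, a; split => //.
- by split => //; apply/eqP.
- split => //; split.
    rewrite NSQ; apply: subset_trans sRS.
    by rewrite -ea; apply: imsetS.
  move=> phi hphi ephiQ; rewrite NSQ -eR.
  have [_ _ gP sPS] := fconj_grp FS cQP.
  have sPPQ : P \subset P * Q by apply: mulg_subl; exact: group1.
  have sQPQ : Q \subset P * Q by apply: mulg_subr; exact: (group1 (Group gP)).
  have cPP : fconj hom P (phi @: P).
    apply/fconjP; exists (restr P phi); split; first exact: (hom_restr FS (P' := Group gP) hphi sPPQ).
    by apply: eq_in_imset => x Px; rewrite restr_in.
  have cQ' : fconj hom Q (phi @: P) := fconj_trans FS cQP cPP.
  have nQ' : phi @: P != Q.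
    apply/eqP => e.
    have [G [f [eG fE injf]]] := hom_morph FS hphi.
    have e2 : f @* P = f @* Q.
      rewrite !morphimEsub -?eG //.
      have e3 : f @: P = phi @: P := eq_imset _ fE.
      have e4 : f @: Q = phi @: Q := eq_imset _ fE.
      by rewrite e3 e4 e ephiQ.
    move/eqP: naQ; apply.
    by apply: (injm_morphim_inj injf); rewrite -?eG.
  exact: leq_trans (maxP _ cQ' nQ') leR.
- move=> V cV nV; apply: leq_trans (maxP V cV _) leR.
  by apply/eqP.
Qed.
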